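(* Let $r\ge 3$ and $n\ge 2$ be integers and let $|X_\ell|=n$ for all $1\le\ell\le r$. Let $\mathcal F\subseteq X_1\times\dots\times X_r$ be coordinate-wise shifted and non-trivial intersecting, and of maximum size among all coordinate-wise shifted non-trivial intersecting families in $X_1\times\dots\times X_r$. Then $$|\mathcal F|\le n^{r-1}-(n-1)^{r-1}+n-1.$$
   Context: Let $X_\ell=[n]$ for $1\le \ell\le r$. For $A,B\in X_1\times\dots\times X_r$, write $A\cap B=\{\ell:A[\ell]=B[\ell]\}$ ($A[\ell]$ the $\ell$-th coordinate). $\mathcal F$ is intersecting if $|A\cap B|\ge 1$ for all $A,B\in\mathcal F$; it is non-trivial if there is no coordinate $\ell$ on which all members of $\mathcal F$ agree. For $1\le\ell\le r$ and $1<j\le n$, the shift $S^{(\ell)}_j$ acts on $F\in\mathcal F$ by: if $F[\ell]=j$ and the sequence $F'$ obtained from $F$ by replacing its $\ell$-th coordinate by $1$ is not in $\mathcal F$, then $S^{(\ell)}_j(F)=F'$; otherwise $S^{(\ell)}_j(F)=F$; $S^{(\ell)}_j(\mathcal F)=\{S^{(\ell)}_j(F):F\in\mathcal F\}$. $\mathcal F$ is coordinate-wise shifted if $S^{(\ell)}_j(\mathcal F)=\mathcal F$ for all $1\le\ell\le r$ and all $1<j\le n$. *)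

(* Defs.v *)
(* Elements of [n] = {1,...,n} are represented by 'I_n = {0,...,n-1};
   the distinguished element 1 of [n] corresponds to the ordinal with value 0,
   and j with 1 < j <= n corresponds to ordinals with value 0 < val j. *)
From mathcomp Require Import all_boot.
Set Implicit Arguments. Unset Strict Implicit. Unset Printing Implicit Defensive.

Section Families.
Variables r n : nat.

Definition seqrn := {ffun 'I_r -> 'I_n}.

Definition agree (A B : seqrn) : {set 'I_r} := [set l | A l == B l].

Definition intersecting (F : {set seqrn}) : Prop :=
  forall A B, A \in F -> B \in F -> 1 <= #|agree A B|.

Definition nontrivial (F : {set seqrn}) : Prop :=
  ~ (exists l : 'I_r, forall A B, A \in F -> B \in F -> A l = B l).

Definition set_first (l : 'I_r) (A : seqrn) : seqrn :=
  [ffun k => if k == l then insubd (A k) 0 else A k].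

Definition shift_elt (l : 'I_r) (j : 'I_n) (F : {set seqrn}) (A : seqrn) : seqrn :=
  if (A l == j) && (set_first l A \notin F) then set_first l A else A.

Definition shift (l : 'I_r) (j : 'I_n) (F : {set seqrn}) : {set seqrn} :=
  [set shift_elt l j F A | A in F].

Definition cw_shifted (F : {set seqrn}) : Prop :=
  forall (l : 'I_r) (j : 'I_n), 0 < val j -> shift l j F = F.

End Families.

(* Main.v *)
Require Import Defs.
From mathcomp Require Import all_boot all_fingroup.
From mathcomp Require Import zify.
Set Implicit Arguments. Unset Strict Implicit. Unset Printing Implicit Defensive.
Section Arcs.
Variables r k : nat.
Hypothesis k0 : 0 < k.
Hypothesis kr : k.*2 <= r.

Lemma r0 : 0 < r.
Proof. move: kr; rewrite -addnn; lia. Qed.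

Definition dm (x t : 'I_r) : nat := (x + (r - t)) %% r.

Lemma dm_lt x t : dm x t < r.
Proof. exact: ltn_pmod r0. Qed.

Lemma dm_trans x u t : dm x t = (dm x u + dm u t) %% r.
Proof.
rewrite /dm modnDm.
have -> : x + (r - u) + (u + (r - t)) = x + (r - t) + r by have := ltn_ord u; lia.
by rewrite modnDr.
Qed.

Lemma dm_inj x y t : dm x t = dm y t -> x = y.
Proof.
move=> /eqP; rewrite /dm eqn_modDr !modn_small ?ltn_ord // => /eqP e.
exact: val_inj.
Qed.

Lemma dm_self t : dm t t = 0.
Proof. by rewrite /dm subnKC ?modnn // ltnW. Qed.

Lemma dm_disj x u t : k <= dm u t <= r - k -> dm x t < k -> dm x u < k -> False.
Proof.
move=> /andP[h1 h2] hxt hxu.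
move: hxt; rewrite (dm_trans x u t) modn_small; last by lia.
lia.
Qed.

Lemma arcsA (P : {set 'I_r}) :
  (forall t u, t \in P -> u \in P -> exists x, dm x t < k /\ dm x u < k) ->
  #|P| <= k.
Proof.
move=> HP.
case: (set_0Vmem P) => [-> | [s sP]]; first by rewrite cards0.
pose g t := if dm t s < k then dm t s else dm t s + k - r.
have C1 : forall t, t \in P -> dm t s < k \/ r - k < dm t s.
  move=> t tP; case: (ltnP (dm t s) k) => h; first by left.
  right; case: (ltnP (r - k) (dm t s)) => // h'.
  have [x [hx1 hx2]] := HP s t sP tP.
  by exfalso; apply: (@dm_disj x t s) => //; rewrite h h'.
have C2 : forall t, t \in P -> g t < k.
  move=> t tP; rewrite /g; case: ifP => // /negbT; rewrite -leqNgt => h.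
  have := dm_lt t s; case: (C1 t tP); lia.
have Cmix : forall t1 t2, t1 \in P -> t2 \in P -> dm t1 s < k -> r - k < dm t2 s ->
    dm t1 s = dm t2 s + k - r -> False.
  move=> t1 t2 t1P t2P h1 h2 e.
  have et := dm_trans t2 t1 s.
  have he : dm t2 t1 = r - k.
    have := dm_lt t2 t1; have := dm_lt t2 s; have := dm_lt t1 s.
    case: (ltnP (dm t2 t1 + dm t1 s) r) => hl.
      by rewrite modn_small in et; lia.
    have e2 : (dm t2 t1 + dm t1 s) %% r = dm t2 t1 + dm t1 s - r.
      have -> : dm t2 t1 + dm t1 s = (dm t2 t1 + dm t1 s - r) + r by lia.
      rewrite modnDr modn_small; first lia.
      have := dm_lt t2 t1; lia.
    rewrite e2 in et; lia.
  have [x [hx1 hx2]] := HP t1 t2 t1P t2P.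
  by apply: (@dm_disj x t2 t1) => //; rewrite he; apply/andP; split; move: kr; rewrite -addnn; lia.
have Cinj : {in P &, injective g}.
  move=> t1 t2 t1P t2P; rewrite /g.
  case: ifP => h1; case: ifP => h2.
  - by move=> e; apply: (@dm_inj _ _ s).
  - move=> e; exfalso; apply: (Cmix t1 t2) => //.
    by case: (C1 t2 t2P) => //; rewrite h2.
  - move=> e; exfalso; apply: (Cmix t2 t1) => //.
    by case: (C1 t1 t1P) => //; rewrite h1.
  - move=> e; apply: (@dm_inj _ _ s).
    have := C1 t1 t1P; have := C1 t2 t2P; rewrite h1 h2; lia.
rewrite cardE -(size_map g) -(size_iota 0 k).
apply: uniq_leq_size.
  by rewrite map_inj_in_uniq ?enum_uniq // => x y; rewrite !mem_enum; apply: Cinj.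
move=> y /mapP [t]; rewrite mem_enum => tP ->; rewrite mem_iota add0n /=.
exact: C2.
Qed.

End Arcs.
Lemma perm_sets (r : nat) (S1 S2 : {set 'I_r}) : #|S1| = #|S2| ->
  exists tau : {perm 'I_r}, tau @: S1 = S2.
Proof.
move: {2}#|S1 :\: S2| (erefl #|S1 :\: S2|) => m.
elim: m S1 => [|m IH] S1 hm hc.
  exists 1%g; rewrite imset_perm1; apply/setP; apply/subset_cardP => //.
  by rewrite -setD_eq0 -cards_eq0 hm.
have [x xD] : exists x, x \in S1 :\: S2.
  by apply/set0Pn; rewrite -cards_eq0 hm.
have [y yD] : exists y, y \in S2 :\: S1.
  apply/set0Pn; rewrite -cards_eq0 cardsD setIC -hc -cardsD hm //.
move: (xD) (yD); rewrite !inE => /andP[xS2 xS1] /andP[yS1 yS2].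
pose t0 := tperm x y.
have im : t0 @: S1 = t0 @^-1: S1 by rewrite -im_permV tpermV.
have hm' : #|t0 @: S1 :\: S2| = m.
  have -> : t0 @: S1 :\: S2 = (S1 :\: S2) :\ x.
    apply/setP=> z; rewrite im !inE.
    case: tpermP => [->|->|hzx hzy].
    - by rewrite eqxx (negbTE yS1) andbF.
    - by rewrite yS2 andbF.
    - by have -> : (z != x) by apply/eqP.
  by move: hm; rewrite (cardsD1 x) xD add1n => -[].
have hc' : #|t0 @: S1| = #|S2| by rewrite card_imset //; apply: perm_inj.
have [t1 ht1] := IH _ hm' hc'.
exists (t0 * t1)%g.
rewrite -ht1 -imset_comp; apply: eq_imset => z /=; by rewrite permM.
Qed.

Section Katona.
Variables r k : nat.
Hypothesis k0 : 0 < k.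
Hypothesis kr : k.*2 <= r.

Lemma kler : k <= r.
Proof. move: kr; rewrite -addnn; lia. Qed.

Definition cnt (X S : {set 'I_r}) := #|[set s : {perm 'I_r} | s @: X == S]|.

Lemma cnt_le (X S1 S2 : {set 'I_r}) : #|S1| = #|S2| -> cnt X S1 <= cnt X S2.
Proof.
move=> /perm_sets [tau htau].
rewrite /cnt -(card_imset _ (mulIg tau)); apply: subset_leq_card.
apply/subsetP=> p /imsetP [s]; rewrite inE => /eqP hs ->; rewrite inE -htau -hs.
rewrite -imset_comp; apply/eqP; apply: eq_imset => z /=; by rewrite permM.
Qed.

Lemma cnt_eq (X S1 S2 : {set 'I_r}) : #|S1| = #|S2| -> cnt X S1 = cnt X S2.
Proof. by move=> h; apply/eqP; rewrite eqn_leq !cnt_le. Qed.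

Definition L := [set S : {set 'I_r} | #|S| == k].

Lemma sum_cnt (X : {set 'I_r}) : #|X| = k -> \sum_(S in L) cnt X S = #|[set: {perm 'I_r}]|.
Proof.
move=> hX.
rewrite -sum1_card (partition_big (fun s : {perm 'I_r} => s @: X) (mem L)) /=; last first.
  by move=> s _; rewrite inE card_imset ?hX //; apply: perm_inj.
apply: eq_bigr => S _; rewrite /cnt -sum1dep_card.
by apply: eq_bigl => s; rewrite inE.
Qed.

End Katona.

Section KatMain.
Variables r k : nat.
Hypothesis k0 : 0 < k.
Hypothesis kr : k.*2 <= r.
Variable Z : {set {set 'I_r}}.
Hypothesis Zint : forall S1 S2, S1 \in Z -> S2 \in Z -> S1 :&: S2 != set0.

Definition arc (t : 'I_r) : {set 'I_r} := [set x : 'I_r | dm x t < k].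

Lemma card_arc t : #|arc t| = k.
Proof.
have r0' := r0 k0 kr.
pose rot (x : 'I_r) : 'I_r := Ordinal (dm_lt k0 kr x t).
have rinj : injective rot by move=> x y /(congr1 val) /= /dm_inj.
have -> : arc t = rot @^-1: [set y : 'I_r | val y < k] by apply/setP=> x; rewrite !inE.
rewrite card_preimset //.
have kr' : k <= r by move: kr; rewrite -addnn; lia.
have -> : [set y : 'I_r | val y < k] = [set widen_ord kr' i | i : 'I_k].
  apply/setP=> y; rewrite inE; apply/idP/imsetP => [h|[i _ ->]]; last by rewrite /= ltn_ord.
  by exists (Ordinal h) => //; apply: val_inj.
by rewrite card_imset ?card_ord // => i j /(congr1 val) /= e; apply: val_inj.
Qed.

Lemma katona : #|[set S in Z | #|S| == k]| <= 'C(r.-1, k.-1).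
Proof.
set z := #|[set S in Z | #|S| == k]|.
set N := #|[set: {perm 'I_r}]|.
have Pb : forall s : {perm 'I_r}, #|[set t : 'I_r | s @: arc t \in Z]| <= k.
  move=> s; apply: (arcsA k0 kr) => t u; rewrite !inE => tZ uZ.
  have := Zint tZ uZ; rewrite -imsetI; last by move=> a b _ _; apply: perm_inj.
  case/set0Pn => y /imsetP [x]; rewrite !inE => /andP[h1 h2] _.
  by exists x.
have S1 : \sum_(s in [set: {perm 'I_r}]) #|[set t : 'I_r | s @: arc t \in Z]| <= N * k.
  rewrite -sum_nat_const; apply: leq_sum => s _; exact: Pb.
have T1 : forall t, \sum_(s in [set: {perm 'I_r}]) ((s @: arc t \in Z) : nat)
                    = z * cnt (arc t) (arc t).
  move=> t.
  rewrite (eq_bigr (fun s : {perm 'I_r} => if s @: arc t \in Z then 1 else 0)); last by move=> s _; case: (_ \in Z).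
  rewrite -big_mkcondr.
  rewrite (partition_big (fun s : {perm 'I_r} => s @: arc t) (mem [set S in Z | #|S| == k])) /=;
    last by move=> s; rewrite !inE /= => sZ; rewrite card_imset ?card_arc ?eqxx ?andbT //; apply: perm_inj.
  rewrite -/z -sum_nat_const; apply: eq_bigr => S; rewrite inE => /andP[SZ /eqP cS].
  rewrite -(@cnt_eq r (arc t) S); last by rewrite card_arc.
  rewrite /cnt -sum1dep_card; apply: eq_bigl => s; rewrite inE.
  by case: eqP => [->|_]; rewrite ?SZ ?andbF.
have T2 : forall t, cnt (arc t) (arc t) * 'C(r, k) = N.
  move=> t; rewrite /N -(@sum_cnt r k (arc t) (card_arc t)).
  rewrite (eq_bigr (fun _ => cnt (arc t) (arc t))); last first.
    by move=> S; rewrite inE => /eqP cS; apply: cnt_eq; rewrite cS card_arc.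
  by rewrite sum_nat_const card_draws card_ord mulnC.
have S2 : \sum_(s in [set: {perm 'I_r}]) #|[set t : 'I_r | s @: arc t \in Z]|
          = \sum_(t : 'I_r) z * cnt (arc t) (arc t).
  rewrite (eq_bigr (fun s : {perm 'I_r} => \sum_(t : 'I_r) ((s @: arc t \in Z) : nat))); last first.
    move=> s _; rewrite -sum1dep_card big_mkcond /=; apply: eq_bigr => t _.
    by case: (_ \in Z).
  rewrite exchange_big /=; apply: eq_bigr => t _; exact: T1.
rewrite S2 in S1.
have := leq_mul S1 (leqnn 'C(r, k)); rewrite big_distrl /=.
rewrite (eq_bigr (fun _ => z * N)); last by move=> t _; rewrite -mulnA T2.
rewrite sum_nat_const card_ord.
have N0 : 0 < N by rewrite card_gt0; apply/set0Pn; exists 1%g; rewrite inE.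
have := mul_bin_diag r k.-1; rewrite prednK // => eb.
rewrite -mulnA -eb.
have -> : r * (z * N) = z * (r * N) by rewrite mulnCA.
have -> : N * (r * 'C(r.-1, k.-1)) = 'C(r.-1, k.-1) * (r * N).
  by rewrite mulnC (mulnC r) mulnA.
by rewrite leq_pmul2r // muln_gt0 N0 andbT (r0 k0 kr).
Qed.

End KatMain.
Section CoreS.
Variable r : nat.
Variable Z : {set {set 'I_r}}.
Hypothesis Zint : forall S1 S2, S1 \in Z -> S2 \in Z -> S1 :&: S2 != set0.

Definition zl k := #|[set S in Z | #|S| == k]|.

Lemma zl_le_bin k : zl k <= 'C(r, k).
Proof.
rewrite /zl; have := card_draws 'I_r k; rewrite card_ord => <-; apply: subset_leq_card.
by apply/subsetP=> S; rewrite !inE => /andP[_ ->].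
Qed.

Lemma zl0 : zl 0 = 0.
Proof.
apply/eqP; rewrite cards_eq0; apply/eqP/setP=> S; rewrite !inE.
apply/negbTE/negP=> /andP[SZ /eqP]; move/cards0_eq => S0.
by have := Zint SZ SZ; rewrite S0 setI0 eqxx.
Qed.

Lemma zl_compl k : k <= r -> zl k + zl (r - k) <= 'C(r, k).
Proof.
move=> kr.
set A := [set S in Z | #|S| == k].
set B := [set ~: S | S in [set S in Z | #|S| == r - k]].
have cB : #|B| = zl (r - k) by rewrite card_imset //; apply: setC_inj.
have dAB : A :&: B = set0.
  apply/setP=> S; rewrite !inE; apply/negbTE/negP=> /andP[/andP[SZ _]].
  case/imsetP=> S' ; rewrite inE => /andP[S'Z _] eS; move: SZ; rewrite eS => SZ.
  by have := Zint SZ S'Z; rewrite setIC setICr eqxx.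
rewrite -cB /zl -/A -cardsUI dAB cards0 addn0.
have := card_draws 'I_r k; rewrite card_ord => <-; apply: subset_leq_card.
apply/subsetP=> S; rewrite !inE; case/orP.
  by case/andP.
case/imsetP=> S'; rewrite inE => /andP[_ /eqP cS'] ->.
by rewrite cardsCs setCK card_ord cS' subKn.
Qed.

Lemma sum_levels q :
  \sum_(S in Z) q ^ (r - #|S|) = \sum_(0 <= k < r.+1) zl k * q ^ (r - k).
Proof.
rewrite big_mkord.
rewrite (partition_big (fun S : {set 'I_r} => (inord #|S| : 'I_r.+1)) predT) //=.
apply: eq_bigr => k _.
rewrite /zl -sum1_card big_distrl /=.
rewrite big_mkcond [RHS]big_mkcond /=; apply: eq_bigr => S _.
rewrite inE mul1n.
have Sr : #|S| < r.+1 by rewrite ltnS; have := max_card S; rewrite card_ord.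
case: (S \in Z) => //=.
have -> : (inord #|S| == k) = (#|S| == k).
  apply/eqP/eqP; [by move=> <-; rewrite inordK | by move=> e; apply: val_inj; rewrite /= inordK -?e].
by case: eqP => // ->.
Qed.


Hypothesis EKR : forall k, 0 < k -> k.*2 <= r -> zl k <= 'C(r.-1, k.-1).
Hypothesis Znot1 : forall S, S \in Z -> #|S| != 1.
Hypothesis r3 : 2 < r.
Variable q : nat.
Hypothesis q1 : 0 < q.

Lemma zl1 : zl 1 = 0.
Proof.
apply/eqP; rewrite cards_eq0; apply/eqP/setP=> S; rewrite !inE.
by apply/negbTE/negP=> /andP[/Znot1 /negbTE ->].
Qed.

Definition fl k := zl k * q ^ (r - k).
Definition hl k := if k == 0 then 0 else 'C(r.-1, k.-1) * q ^ (r - k).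
Definition cA k := ((k == 1) + (k == r.-1)) * q ^ r.-1.
Definition cB k := ((k == 1) + (k == r.-1)) * q.

Lemma perk_half k : k.*2 <= r -> fl k + fl (r - k) + cA k <= hl k + hl (r - k) + cB k.
Proof.
move=> kr.
have kr' : k <= r by move: kr; rewrite -addnn; lia.
case: k kr kr' => [|[|k]] kr kr'.
- rewrite /fl /cA /cB /hl zl0 subn0 subnn /= expn0 muln1.
  have -> : (0 == r.-1) = false by apply/negbTE; lia.
  have -> : (r == 0) = false by apply/negbTE; lia.
  have := zl_le_bin r; rewrite !binn. lia.
- rewrite /fl /cA /cB /hl zl1.
  have -> : (1 == r.-1) = false by apply/negbTE; lia.
  have -> : (r - 1 == 0) = false by apply/negbTE; lia.
  have e1 : r - (r - 1) = 1 by lia.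
  have e2 : (r - 1).-1 = r.-1.-1 by lia.
  rewrite e1 e2 /= expn1 bin0.
  have hb : 'C(r.-1, r.-1.-1) = r.-1.
    have -> : r.-1.-1 = r.-1 - 1 by lia.
    by rewrite bin_sub ?bin1 //; lia.
  have := zl_le_bin (r - 1).
  have -> : 'C(r, r - 1) = r by rewrite bin_sub ?bin1 //; lia.
  rewrite hb subn1; nia.
- set k' := k.+2.
  have ek : k.+2 = k' by [].
  have c0 : cA k' = 0 by rewrite /cA; have -> : (k' == 1) = false by [];
     have -> : (k' == r.-1) = false by apply/negbTE; lia.
  have c1 : cB k' = 0 by rewrite /cB; have -> : (k' == 1) = false by [];
     have -> : (k' == r.-1) = false by apply/negbTE; lia.
  rewrite c0 c1 !addn0 /fl /hl.
  have -> : (k' == 0) = false by [].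
  have -> : (r - k' == 0) = false by apply/negbTE; lia.
  have e1 : r - (r - k') = k' by lia.
  rewrite e1.
  have ekr := EKR (isT : 0 < k') kr.
  have hc := zl_compl kr'.
  have eb : 'C(r, k') = 'C(r.-1, k'.-1) + 'C(r.-1, k').
    rewrite -[in LHS](prednK (_ : 0 < r)); last lia.
    by rewrite /k' binS addnC.
  have eb2 : 'C(r.-1, (r - k').-1) = 'C(r.-1, k').
    have -> : (r - k').-1 = r.-1 - k' by lia.
    by rewrite bin_sub //; lia.
  rewrite eb2.
  have XY : q ^ k' <= q ^ (r - k') by apply: leq_pexp2l => //; lia.
  move: ekr hc XY; rewrite eb.
  set a := zl k'; set b := zl (r - k'); set c1' := 'C(r.-1, k'.-1); set c2 := 'C(r.-1, k').
  set X := q ^ (r - k'); set Y := q ^ k'.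
  nia.
Qed.


Lemma perk k : k <= r -> fl k + fl (r - k) + cA k <= hl k + hl (r - k) + cB k.
Proof.
move=> kr.
case: (leqP k.*2 r) => h; first exact: perk_half.
have h' : (r - k).*2 <= r by move: h; rewrite -!addnn; lia.
have := perk_half h'.
have -> : r - (r - k) = k by lia.
have -> : cA (r - k) = cA k.
  rewrite /cA; congr (_ * _).
  have -> : (r - k == 1) = (k == r.-1) by apply/eqP/eqP; lia.
  have -> : (r - k == r.-1) = (k == 1) by apply/eqP/eqP; lia.
  by rewrite addnC.
have -> : cB (r - k) = cB k.
  rewrite /cB; congr (_ * _).
  have -> : (r - k == 1) = (k == r.-1) by apply/eqP/eqP; lia.
  have -> : (r - k == r.-1) = (k == 1) by apply/eqP/eqP; lia.
  by rewrite addnC.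
by rewrite (addnC (fl (r - k))) (addnC (hl (r - k))).
Qed.

Lemma sum_ind (m i c : nat) : i < m -> \sum_(0 <= k < m) (k == i) * c = c.
Proof.
move=> im; rewrite big_mkord (bigD1 (Ordinal im)) //= eqxx mul1n big1 ?addn0 //.
move=> k hk; have -> : (val k == i) = false; last by [].
apply/negbTE; apply: contra hk => /eqP e; apply/eqP/val_inj; exact: e.
Qed.

Lemma sum_hl : \sum_(0 <= k < r.+1) hl k = (q + 1) ^ r.-1.
Proof.
have [r' er] : exists r', r = r'.+1 by exists r.-1; lia.
rewrite er big_nat_recl //= /hl /= add0n expnDn big_mkord.
apply: eq_bigr => k _; by rewrite exp1n muln1 er /= subSS.
Qed.

Lemma main_sum : \sum_(S in Z) q ^ (r - #|S|) + q ^ r.-1 <= (q + 1) ^ r.-1 + q.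
Proof.
rewrite sum_levels.
have H : \sum_(0 <= k < r.+1) (fl k + fl (r - k) + cA k) <=
         \sum_(0 <= k < r.+1) (hl k + hl (r - k) + cB k).
  rewrite !big_mkord; apply: leq_sum => k _; apply: perk; rewrite -ltnS; exact: ltn_ord.
rewrite !big_split /= in H.
have rv : forall F : nat -> nat, \sum_(0 <= k < r.+1) F (r - k) = \sum_(0 <= k < r.+1) F k.
  move=> F; rewrite [RHS]big_nat_rev; apply: eq_bigr => k _; by rewrite add0n subSS.
rewrite !rv in H.
have sA : \sum_(0 <= k < r.+1) cA k = (q ^ r.-1).*2.
  rewrite /cA; under eq_bigr do rewrite mulnDl.
  rewrite big_split /= !sum_ind ?addnn //; lia.
have sB : \sum_(0 <= k < r.+1) cB k = q.*2.
  rewrite /cB; under eq_bigr do rewrite mulnDl.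
  rewrite big_split /= !sum_ind ?addnn //; lia.
rewrite sA sB sum_hl in H.
rewrite /fl in H.
move: H; rewrite -!addnn; lia.
Qed.

End CoreS.
Section Vec.
Variables r n : nat.
Hypothesis n0 : 0 < n.
Implicit Types (F : {set seqrn r n}) (A B : seqrn r n).

Lemma set_first_val l A k : val (set_first l A k) = if k == l then 0 else val (A k).
Proof. rewrite /set_first ffunE; case: eqP => // _; by rewrite val_insubd n0. Qed.

Lemma shift_mem F l A : cw_shifted F -> A \in F -> set_first l A \in F.
Proof.
move=> sh AF.
case: (posnP (val (A l))) => [A0|Apos].
  have -> : set_first l A = A; last by [].
  apply/ffunP=> k; apply: val_inj; rewrite set_first_val; case: eqP => // ->; by rewrite A0.
case: (boolP (set_first l A \in F)) => // nF.
have : shift_elt l (A l) F A \in shift l (A l) F by apply: imset_f.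
rewrite (sh l (A l) Apos) /shift_elt eqxx nF /=. by move=> h; rewrite h in nF.
Qed.

Definition zero_on (J : {set 'I_r}) A : seqrn r n :=
  [ffun k => if k \in J then insubd (A k) 0 else A k].

Lemma zero_on_val J A k : val (zero_on J A k) = if k \in J then 0 else val (A k).
Proof. rewrite /zero_on ffunE; case: ifP => // _; by rewrite val_insubd n0. Qed.

Lemma zero_on_seq F A (s : seq 'I_r) : cw_shifted F -> A \in F -> zero_on [set x in s] A \in F.
Proof.
move=> sh AF; elim: s => [|l s IH].
  have -> : zero_on [set x in [::]] A = A; last by [].
  by apply/ffunP=> k; apply: val_inj; rewrite zero_on_val inE.
have -> : zero_on [set x in l :: s] A = set_first l (zero_on [set x in s] A).
  apply/ffunP=> k; apply: val_inj; rewrite set_first_val !zero_on_val !inE.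
  by case: (k == l).
exact: shift_mem.
Qed.

Lemma zero_on_mem F A J : cw_shifted F -> A \in F -> zero_on J A \in F.
Proof. move=> sh AF; rewrite -[J]set_enum; exact: zero_on_seq. Qed.

Definition zeroset A : {set 'I_r} := [set l | val (A l) == 0].

Lemma common_zero F A B : cw_shifted F -> intersecting F -> A \in F -> B \in F ->
  zeroset A :&: zeroset B != set0.
Proof.
move=> sh it AF BF.
have A'F : zero_on (agree A B) A \in F by apply: zero_on_mem.
have := it _ _ A'F BF; rewrite card_gt0; case/set0Pn => l; rewrite inE => /eqP E.
apply/set0Pn; exists l.
have := congr1 val E; rewrite zero_on_val !inE.
case: eqP => [ABl|nAB] hv.
  by rewrite ABl -hv eqxx.
by exfalso; apply: nAB; apply: val_inj.
Qed.

Lemma zeroset_not1 F A : cw_shifted F -> intersecting F -> nontrivial F -> A \in F ->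
  #|zeroset A| != 1.
Proof.
move=> sh it nt AF; apply/negP => /cards1P [l El].
apply: nt; exists l => B C BF CF.
have hz : forall D, D \in F -> val (D l) = 0.
  move=> D DF; have := common_zero sh it AF DF; rewrite El.
  by case/set0Pn=> x; rewrite !inE => /andP[/eqP -> /eqP].
by apply: val_inj; rewrite !hz.
Qed.

End Vec.

Lemma card_zs r n (n0 : 0 < n) (S : {set 'I_r}) :
  #|[set A : seqrn r n | zeroset A == S]| = n.-1 ^ (r - #|S|).
Proof.
pose z0 : 'I_n := Ordinal n0.
pose G := fun l : 'I_r => if l \in S then pred1 z0 else predC1 z0.
have -> : [set A : seqrn r n | zeroset A == S] = [set A : seqrn r n | A \in family G].
  apply/setP=> A; rewrite !in_set.
  apply/eqP/familyP; [move=> E l | move=> h].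
    rewrite /G -E inE; case: eqP => /= [hz|hz]; apply/eqP.
      by apply: val_inj.
    by move=> e0; apply: hz; rewrite e0.
  apply/setP=> l; rewrite inE; have := h l; rewrite /G.
  case: (l \in S) => /=; rewrite inE.
    by move/eqP ->.
  by apply: contraNF => /eqP hz; apply/eqP/val_inj.
rewrite cardsE card_family foldrE big_map big_enum /=.
rewrite (bigID (fun l => l \in S)) /=.
rewrite (eq_bigr (fun _ => 1)); last by move=> l hl; rewrite /G hl card1.
rewrite [X in _ * X](eq_bigr (fun _ => n.-1)); last first.
  move=> l hl; rewrite /G (negbTE hl) cardC1 card_ord. done.
rewrite prod_nat_const exp1n mul1n prod_nat_const. congr (_ ^ _).
have h := cardC S; rewrite card_ord in h.
have e : #|(fun i : 'I_r => i \notin S)| = #|[predC S]| by apply: eq_card.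
rewrite e; apply/eqP; rewrite eq_sym -(eqn_add2l #|S|) subnKC; [by rewrite h | by have := max_card S; rewrite card_ord].
Qed.

Lemma card_le_sum r n (F : {set seqrn r n}) (n0 : 0 < n) :
  #|F| <= \sum_(S in [set zeroset A | A in F]) n.-1 ^ (r - #|S|).
Proof.
rewrite -sum1_card (partition_big (@zeroset r n) (mem [set zeroset A | A in F])) /=;
  last by move=> A AF; apply: imset_f.
apply: leq_sum => S _.
rewrite -(card_zs n0 S) -sum1dep_card.
rewrite big_mkcond [X in _ <= X]big_mkcond /=; apply: leq_sum => A _; by case: (A \in F); case: (zeroset A == S).
Qed.

Theorem lemma2p5 (r n : nat) (F : {set seqrn r n}) :
  3 <= r -> 2 <= n ->
  cw_shifted F -> intersecting F -> nontrivial F ->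
  (forall G : {set seqrn r n},
      cw_shifted G -> intersecting G -> nontrivial G -> #|G| <= #|F|) ->
  #|F| <= n ^ (r - 1) - (n - 1) ^ (r - 1) + n - 1.
Proof.
move=> r3 n2 sh it nt _.
have n0 : 0 < n by lia.
set Z := [set zeroset A | A in F].
have Zint : forall S1 S2, S1 \in Z -> S2 \in Z -> S1 :&: S2 != set0.
  move=> S1 S2 /imsetP [A AF ->] /imsetP [B BF ->]; exact: (common_zero n0 sh it AF BF).
have Znot1 : forall S, S \in Z -> #|S| != 1.
  move=> S /imsetP [A AF ->]; exact: (zeroset_not1 n0 sh it nt AF).
have EKR : forall k, 0 < k -> k.*2 <= r -> zl Z k <= 'C(r.-1, k.-1).
  by move=> k k0 kr; apply: katona.
have q1 : 0 < n.-1 by lia.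
have hm := main_sum Zint EKR Znot1 r3 q1.
have hc := card_le_sum F n0.
rewrite -/Z in hc.
move: hm; rewrite addn1 prednK // => hm.
rewrite !subn1.
move: hc hm; set W := \sum_(S in Z) _; set a := n ^ r.-1; set b := n.-1 ^ r.-1; move=> hc hm; lia.
Qed.
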